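(* The dynamical system $(X,T)$ is topologically mixing: for any nonempty open sets $U,V\subset X$ there is $N$ such that $T^n(U)\cap V\neq\emptyset$ for all $n\geq N$.
   Context: Paths and cycles: a graph is $G=(V,E)$ with $V$ finite and $E\subset V\times V$. A path is a finite sequence of vertices $(u_0,\dots,u_L)$ with $(u_j,u_{j+1})\in E$; its length is $|\cdot|=L$; a cycle is a path with $u_0=u_L$. For paths where one ends where the next starts, $+$ denotes concatenation and $a\,c$ means the cycle $c$ traversed $a$ times. Construction: $G_0=(V_0,E_0)$ with $V_0=\{v_{0,0}\}$, $E_0=\{e_{0,0}\}$, $e_{0,0}=(v_{0,0},v_{0,0})$. For $n\geq1$, $G_n=(V_n,E_n)$ consists of a vertex $v_{n,0}$, the loop $e_{n,0}=(v_{n,0},v_{n,0})$, and $n$ cycles $c_{n,1},\dots,c_{n,n}$, each starting and ending at $v_{n,0}$, whose vertices other than $v_{n,0}$ are pairwise distinct (within each cycle and across cycles); $V_n$ is the set of all these vertices and $E_n$ consists of $e_{n,0}$ and the edges of the cycles. The maps $\varphi_n\colon V_{n+1}\to V_n$ and the lengths of the cycles $c_{n+1,i}$ are defined together: $\varphi_n(v_{n+1,0})=v_{n,0}$, and for each $i$ a path $P_{n,i}$ in $G_n$ from $v_{n,0}$ to $v_{n,0}$ is given; $c_{n+1,i}$ has length $|P_{n,i}|$ and $\varphi_n$ maps its $j$-th vertex to the $j$-th vertex of $P_{n,i}$ (written $\varphi_n(c_{n+1,i})=P_{n,i}$). The paths are: $P_{0,1}=10\,e_{0,0}$; for $n\geq1$: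 $P_{n,i}=e_{n,0}+2c_{n,i}+2c_{n,i+1}+\dots+2c_{n,n}+e_{n,0}$ for $2\leq i\leq n$; $P_{n,n+1}=(n+2)^2\big(\sum_{i=1}^n|c_{n,i}|\big)\,e_{n,0}$; and $P_{n,1}=(1\,e_{n,0}+2c_{n,1})+(2\,e_{n,0}+2c_{n,1})+\dots+(k_n\,e_{n,0}+2c_{n,1})+e_{n,0}+2c_{n,2}+\dots+2c_{n,n}+e_{n,0}$, where $k_n=2\big(1+\sum_{i=1}^n|c_{n,i}|\big)$. Let $X=\{x\in\prod_{n\geq0}V_n:\varphi_n(x_{n+1})=x_n\ \forall n\}$ with metric $d(x,y)=2^{-\min\{i:x_i\neq y_i\}}$ ($d(x,x)=0$); $X$ is a compact zero-dimensional metric space, and $T\colon X\to X$ defined by $T(x)=y$ iff $(x_n,y_n)\in E_n$ for all $n$ is a well-defined homeomorphism. Write $x_n$ for the $n$-th coordinate of $x$. *)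

(* Defs.v *)
From mathcomp Require Import all_boot.
Set Implicit Arguments. Unset Strict Implicit. Unset Printing Implicit Defensive.

(* Vertices of every G_n are encoded as pairs of naturals:
   (0,0)  = the base vertex v_{n,0};
   (i,j)  = the j-th vertex (1 <= j <= |c_{n,i}|-1) of the cycle c_{n,i}. *)
Definition vtx := (nat * nat)%type.
Definition base : vtx := (0, 0).

Definition plen (p : seq vtx) : nat := (size p).-1.
(* concatenation p + q of paths, q starting where p ends *)
Definition pcat (p q : seq vtx) : seq vtx := p ++ behead q.
Definition pcats (s : seq (seq vtx)) : seq vtx := foldr pcat [:: base] s.
(* a c = the cycle c (based at base) traversed a times *)
Definition rep (a : nat) (c : seq vtx) : seq vtx := pcats (nseq a c).
Definition eloop : seq vtx := [:: base; base].
Definition cyc (i L : nat) : seq vtx :=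
  base :: rcons [seq (i, j) | j <- iota 1 L.-1] base.

(* lens = [:: |c_{n,1}|; ...; |c_{n,n}|];  cycle c_{n,i} *)
Definition cycof (lens : seq nat) (i : nat) : seq vtx := cyc i (nth 0 lens i.-1).

Definition tail2 (n : nat) (lens : seq nat) (i : nat) : seq vtx :=
  pcats [seq rep 2 (cycof lens j) | j <- iota i (n.+1 - i)].

Definition Ppath (n : nat) (lens : seq nat) (i : nat) : seq vtx :=
  if n is 0 then rep 10 eloop
  else if i == 1 then
    let kn := 2 * (1 + sumn lens) in
    pcats ([seq pcat (rep k eloop) (rep 2 (cycof lens 1)) | k <- iota 1 kn]
           ++ [:: eloop; tail2 n lens 2; eloop])
  else if i <= n then pcats [:: eloop; tail2 n lens i; eloop]
  else (* i = n+1 *) rep ((n + 2) ^ 2 * sumn lens) eloop.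

Fixpoint lens (n : nat) : seq nat :=
  match n with
  | 0 => [::]
  | n'.+1 => [seq plen (Ppath n' (lens n') i) | i <- iota 1 n'.+1]
  end.

Definition valid (n : nat) (v : vtx) : bool :=
  (v == base) || [&& 1 <= v.1 <= n & 1 <= v.2 < nth 0 (lens n) v.1.-1].

Definition pedges (p : seq vtx) : seq (vtx * vtx) := zip p (behead p).
Definition cycles (n : nat) : seq (seq vtx) := [seq cycof (lens n) i | i <- iota 1 n].
Definition edge (n : nat) (u v : vtx) : bool :=
  ((u, v) \in pedges eloop) || has (fun c => (u, v) \in pedges c) (cycles n).

Definition phi (n : nat) (v : vtx) : vtx :=
  if v == base then base else nth base (Ppath n (lens n) v.1) v.2.

Definition point := nat -> vtx.
Definition inX (x : point) : Prop :=
  forall n, valid n (x n) /\ phi n (x n.+1) = x n.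

Definition Trel (x y : point) : Prop := forall n, edge n (x n) (y n).

Fixpoint Tpow (k : nat) (x y : point) : Prop :=
  match k with
  | 0 => x = y
  | k'.+1 => exists z, inX z /\ Trel x z /\ Tpow k' z y
  end.

(* Open subsets of (X,d), d(x,y) = 2^{-min{i : x_i <> y_i}}.
   The open d-ball of radius 2^{-k} about x is {y in X | y_i = x_i for all i <= k},
   and these radii are cofinal among eps > 0, so U is open iff: *)
Definition openX (U : point -> Prop) : Prop :=
  (forall x, U x -> inX x) /\
  (forall x, U x -> exists k, forall y, inX y ->
       (forall i, i <= k -> y i = x i) -> U y).

(* Main.v *)
Require Import Defs.
From mathcomp Require Import all_boot zify.
Set Implicit Arguments. Unset Strict Implicit. Unset Printing Implicit Defensive.


Definition bp (p : seq vtx) : bool :=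
  if p is x :: s then (x == base) && (last x s == base) else false.

Lemma bpE p : bp p -> exists s, p = base :: s /\ last base s = base.
Proof. case: p => [|x s] //= /andP [/eqP -> /eqP Hs]. by exists s. Qed.

Lemma bp_pcat p q : bp p -> bp q -> bp (pcat p q).
Proof.
move=> /bpE [s [-> Hs]] /bpE [t [-> Ht]].
by rewrite /pcat /= last_cat Hs Ht eqxx.
Qed.

Lemma plen_pcat p q : bp p -> bp q -> plen (pcat p q) = plen p + plen q.
Proof.
move=> /bpE [s [-> Hs]] /bpE [t [-> Ht]].
by rewrite /pcat /plen /= size_cat.
Qed.

Lemma nth_pcatl p q x : bp p -> x <= plen p -> nth base (pcat p q) x = nth base p x.
Proof.
move=> /bpE [s [-> Hs]] Hx.
rewrite /pcat nth_cat /plen /=. by rewrite ifT //; rewrite /plen /= in Hx; lia.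
Qed.

Lemma nth_pcatr p q x : bp p -> bp q -> nth base (pcat p q) (plen p + x) = nth base q x.
Proof.
move=> /bpE [s [-> Hs]] /bpE [t [-> Ht]].
rewrite /pcat /plen nth_cat.
case: x => [|x].
  rewrite addn0 ifT; last by rewrite /=; lia.
  have := nth_last base (base :: s). by rewrite /= Hs.
rewrite ifF; last by rewrite /=; lia.
have -> : (size (base :: s)).-1 + x.+1 - size (base :: s) = x by rewrite /=; lia.
by [].
Qed.

Lemma pcat_assoc a b c : bp b -> pcat a (pcat b c) = pcat (pcat a b) c.
Proof. move=> /bpE [s [-> Hs]]. by rewrite /pcat /= catA. Qed.

Lemma pcat_base_l y : bp y -> pcat [:: base] y = y.
Proof. by move=> /bpE [s [-> Hs]]. Qed.

Lemma pcat_base_r y : pcat y [:: base] = y.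
Proof. by rewrite /pcat /= cats0. Qed.

Lemma bp_pcats l : all bp l -> bp (pcats l).
Proof.
elim: l => [|a l IH] //= /andP [Ha Hl]. exact: bp_pcat Ha (IH Hl).
Qed.

Lemma plen_pcats l : all bp l -> plen (pcats l) = sumn (map plen l).
Proof.
elim: l => [|a l IH] //= /andP [Ha Hl].
by rewrite plen_pcat ?IH //; apply: bp_pcats.
Qed.

Lemma pcats_cons a l : pcats (a :: l) = pcat a (pcats l).
Proof. by []. Qed.

Lemma pcats_cat l1 l2 : all bp l1 -> all bp l2 ->
  pcats (l1 ++ l2) = pcat (pcats l1) (pcats l2).
Proof.
move=> H1 H2. elim: l1 H1 => [|a l IH] /=.
  by rewrite pcat_base_l // bp_pcats.
move=> /andP [Ha Hl]. rewrite IH // pcat_assoc //. exact: bp_pcats.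
Qed.

Lemma bp_rep a c : bp c -> bp (rep a c).
Proof. move=> Hc. apply: bp_pcats. by elim: a => //= a ->; rewrite Hc. Qed.

Lemma plen_rep a c : bp c -> plen (rep a c) = a * plen c.
Proof.
move=> Hc. rewrite /rep plen_pcats; last by elim: a => //= a ->; rewrite Hc.
elim: a => //= a ->. by rewrite mulSn.
Qed.

Lemma rep2 c : rep 2 c = pcat c c.
Proof. by rewrite /rep /= pcat_base_r. Qed.

Lemma bp_eloop : bp eloop. Proof. by []. Qed.

Lemma bp_cyc i L : bp (cyc i L).
Proof. by rewrite /cyc /= last_rcons eqxx. Qed.

Lemma bp_tail2 n l i : bp (tail2 n l i).
Proof.
apply: bp_pcats. apply/allP => p /mapP [j _ ->]. apply: bp_rep. exact: bp_cyc.
Qed.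

Lemma bp_Ppath n l i : bp (Ppath n l i).
Proof.
rewrite /Ppath. case: n => [|n]; first exact: bp_rep.
case: ifP => _.
  apply: bp_pcats. rewrite all_cat. apply/andP; split.
    apply/allP => p /mapP [j _ ->]. by apply: bp_pcat; apply: bp_rep => //; apply: bp_cyc.
  by rewrite /= bp_tail2.
case: ifP => _; first by apply: bp_pcats; rewrite /= bp_tail2.
exact: bp_rep.
Qed.

Definition gp m (p : seq vtx) := path (edge m) (head base p) (behead p) && all (valid m) p.

Lemma gp_pcat m p q : bp p -> bp q -> gp m p -> gp m q -> gp m (pcat p q).
Proof.
move=> /bpE [s [-> Hs]] /bpE [t [-> Ht]].
rewrite /gp /pcat.
move=> /andP [P1 A1] /andP [P2 A2]. apply/andP; split.
  move: P1 P2 => /= P1 P2. by rewrite cat_path P1 Hs P2.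
apply/allP => v. rewrite /= -cat_cons mem_cat => /orP [H|H].
  exact: (allP A1).
apply: (allP A2). by rewrite inE H orbT.
Qed.

Lemma gp_pcats m l : all bp l -> all (gp m) l -> gp m (pcats l).
Proof.
elim: l => [|a l IH] /=; first by [].
move=> /andP [Ha Hl] /andP [Ga Gl]. apply: gp_pcat => //; first exact: bp_pcats.
exact: IH.
Qed.

Lemma gp_rep m a c : bp c -> gp m c -> gp m (rep a c).
Proof.
move=> Hb Hg. apply: gp_pcats; elim: a => //= a ->; by rewrite ?Hb ?Hg.
Qed.

Lemma edge_bb m : edge m base base.
Proof. by rewrite /edge /pedges /=. Qed.

Lemma gp_eloop m : gp m eloop.
Proof. by []. Qed.

Lemma path_zip (T : Type) (e : rel T) x s :
  path e x s = all (fun uv => e uv.1 uv.2) (zip (x :: s) s).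
Proof. by elim: s x => [|y s IH] x //=; rewrite IH. Qed.

Lemma gp_cyc m r : 1 <= r <= m -> gp m (cycof (lens m) r).
Proof.
move=> Hr. apply/andP; split.
  rewrite /cycof /cyc /= path_zip. apply/allP => [[u v]] Huv /=.
  rewrite /edge. apply/orP; right. apply/hasP.
  exists (cycof (lens m) r); last by [].
  apply/mapP. exists r => //. rewrite mem_iota. lia.
rewrite /cycof /cyc /= all_rcons /=.
apply/allP => v /mapP [j Hj ->] /=. rewrite mem_iota in Hj.
apply/orP; right. rewrite /=. apply/andP; split; first lia.
apply/andP; split; lia.
Qed.

Lemma all3 (T : Type) (P : pred T) a b c : all P [:: a; b; c] = [&& P a, P b & P c].
Proof. by rewrite /= andbT. Qed.

Lemma gp_tail2 m i : 1 <= i -> gp m (tail2 m (lens m) i).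
Proof.
move=> Hi. apply: gp_pcats.
  apply/allP => p /mapP [j _ ->]. apply: bp_rep. exact: bp_cyc.
apply/allP => p /mapP [j Hj ->]. apply: gp_rep; first exact: bp_cyc.
apply: gp_cyc. rewrite mem_iota in Hj. lia.
Qed.

Lemma gp_Ppath m i : 1 <= i <= m.+1 -> gp m (Ppath m (lens m) i).
Proof.
move=> Hi. rewrite /Ppath. case: m Hi => [|m] Hi.
  apply: gp_rep => //; exact: gp_eloop.
case: ifP => Hi1.
  apply: gp_pcats.
    rewrite all_cat. apply/andP; split.
      apply/allP => p /mapP [j _ ->]. by apply: bp_pcat; apply: bp_rep => //; apply: bp_cyc.
    by rewrite /= bp_tail2.
  rewrite all_cat. apply/andP; split.
    apply/allP => p /mapP [j _ ->]. apply: gp_pcat; try (apply: bp_rep => //; apply: bp_cyc).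
      apply: gp_rep => //; exact: gp_eloop.
    apply: gp_rep; first exact: bp_cyc. apply: gp_cyc. lia.
  by rewrite all3 gp_eloop gp_tail2.
case: ifP => Hi2.
  apply: gp_pcats; first by rewrite /= bp_tail2.
  rewrite all3 gp_eloop gp_tail2 //. lia.
apply: gp_rep => //; exact: gp_eloop.
Qed.

Lemma plen_eloop : plen eloop = 1. Proof. by []. Qed.

Lemma size_cyc i L : 1 <= L -> size (cyc i L) = L.+1.
Proof. move=> HL. rewrite /cyc /= size_rcons size_map size_iota. lia. Qed.

Lemma plen_cyc i L : 1 <= L -> plen (cyc i L) = L.
Proof. move=> HL. by rewrite /plen size_cyc. Qed.

Lemma nth_cyc i L j : 1 <= L ->
  nth base (cyc i L) j = if j == 0 then base else if j < L then (i, j) else base.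
Proof.
move=> HL. rewrite /cyc. case: j => [|j] //=.
rewrite nth_rcons size_map size_iota.
case: ifP => Hj.
  rewrite (nth_map 0); last by rewrite size_iota.
  rewrite nth_iota // ifT; last by lia.
  by rewrite add1n.
have Hj' : ~~ (j.+1 < L) by move/negbT: Hj; lia.
rewrite (negbTE Hj'). by case: ifP.
Qed.

Lemma Ppath_pos m l i : (m == 0) || (0 < sumn l) -> 0 < plen (Ppath m l i).
Proof.
move=> H. rewrite /Ppath. case: m H => [|m] H.
  by rewrite plen_rep.
case: ifP => Hi1.
  rewrite plen_pcats; last first.
    rewrite all_cat. apply/andP; split.
      apply/allP => p /mapP [j _ ->]. by apply: bp_pcat; apply: bp_rep => //; apply: bp_cyc.
    by rewrite /= bp_tail2.
  rewrite map_cat sumn_cat /= plen_eloop. lia.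
case: ifP => Hi2.
  rewrite plen_pcats /=; last by rewrite bp_tail2.
  rewrite plen_eloop. lia.
rewrite plen_rep // plen_eloop. rewrite /= in H. 
have : 0 < (m.+1 + 2) ^ 2 by rewrite expn_gt0.
move: H. set a := (m.+1 + 2) ^ 2. nia.
Qed.

Lemma lens_size m : size (lens m) = m.
Proof. by case: m => //= m; rewrite size_map size_iota. Qed.

Lemma lens_S m : lens m.+1 = [seq plen (Ppath m (lens m) i) | i <- iota 1 m.+1].
Proof. by []. Qed.

Lemma lens_nth m i : 1 <= i <= m.+1 ->
  nth 0 (lens m.+1) i.-1 = plen (Ppath m (lens m) i).
Proof.
move=> Hi. rewrite lens_S (nth_map 0); last by rewrite size_iota; lia.
rewrite nth_iota; last by lia.
by have -> : 1 + i.-1 = i by lia.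
Qed.

Lemma P1_pos m l : 0 < plen (Ppath m l 1).
Proof.
rewrite /Ppath. case: m => [|m]; first by rewrite plen_rep.
rewrite eqxx plen_pcats; last first.
  rewrite all_cat. apply/andP; split.
    apply/allP => p /mapP [j _ ->]. by apply: bp_pcat; apply: bp_rep => //; apply: bp_cyc.
  by rewrite /= bp_tail2.
rewrite map_cat sumn_cat /= plen_eloop. lia.
Qed.

Lemma nth0_sumn s : nth 0 s 0 <= sumn s.
Proof. case: s => //= a s. lia. Qed.

Lemma lens_sum_pos m : 0 < m -> 0 < sumn (lens m).
Proof.
case: m => // m _.
have H : nth 0 (lens m.+1) 0 = plen (Ppath m (lens m) 1) by apply: (@lens_nth m 1); lia.
have := nth0_sumn (lens m.+1). rewrite H.
have := P1_pos m (lens m). lia.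
Qed.

Lemma lens_pos m i : 1 <= i <= m -> 0 < nth 0 (lens m) i.-1.
Proof.
case: m => [|m] Hi; first lia.
rewrite lens_nth //. apply: Ppath_pos.
case: m {Hi} => [|m] //. apply/orP; right. exact: lens_sum_pos.
Qed.

Lemma plen_P_pos m i : 1 <= i <= m.+1 -> 0 < plen (Ppath m (lens m) i).
Proof. move=> Hi. rewrite -lens_nth //. apply: lens_pos. lia. Qed.

Lemma nth_plen p : bp p -> nth base p (plen p) = base.
Proof.
move=> /bpE [s [-> Hs]]. by rewrite /plen nth_last /= Hs.
Qed.

Lemma nth0_bp p : bp p -> nth base p 0 = base.
Proof. by move=> /bpE [s [-> Hs]]. Qed.

Lemma phi_cyc m i j : 1 <= i <= m.+1 -> j <= plen (Ppath m (lens m) i) ->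
  phi m (nth base (cycof (lens m.+1) i) j) = nth base (Ppath m (lens m) i) j.
Proof.
move=> Hi Hj. have HL := plen_P_pos Hi.
have Hb := bp_Ppath m (lens m) i.
rewrite /cycof lens_nth // nth_cyc //.
case: ifP => [/eqP -> | Hj0]; first by rewrite /phi eqxx nth0_bp.
case: ifP => Hj1.
  rewrite /phi. have -> : ((i, j) == base) = false.
    rewrite /base xpair_eqE. apply/negbTE. lia.
  by [].
have -> : j = plen (Ppath m (lens m) i) by move/negbT: Hj1; lia.
by rewrite /phi eqxx nth_plen.
Qed.

Lemma phi_valid m v : valid m.+1 v -> valid m (phi m v).
Proof.
move=> Hv. case: (v =P base) => [-> //|Hb].
move: Hv; rewrite /valid (introF eqP Hb) /= => /andP [Hi Hj].
rewrite /phi (introF eqP Hb).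
have /andP [_ /allP Ha] := gp_Ppath Hi.
apply: Ha. apply: mem_nth. move: Hj. rewrite lens_nth // /plen => /andP [_ H]. apply: leq_trans H _. exact: leq_pred.
Qed.

Lemma phi_edge m a b : edge m.+1 a b -> edge m (phi m a) (phi m b).
Proof.
rewrite {1}/edge => /orP [H | /hasP [c Hc Hab]].
  move: H; rewrite /pedges /= inE => /eqP [-> ->]. rewrite /phi eqxx. exact: edge_bb.
move/mapP: Hc => [i Hi ->] in Hab. rewrite mem_iota in Hi.
have Hi' : 1 <= i <= m.+1 by lia.
move/(nthP (base,base)): Hab => [k Hk Hnth].
have HL := plen_P_pos Hi'.
have Hsz : size (cycof (lens m.+1) i) = (plen (Ppath m (lens m) i)).+1.
  by rewrite /cycof lens_nth // size_cyc.
rewrite /pedges size_zip size_behead Hsz in Hk.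
have Hk' : k < plen (Ppath m (lens m) i) by move: Hk; rewrite /=; lia.
have -> : a = nth base (cycof (lens m.+1) i) k.
  by rewrite -[a]/((a,b).1) -Hnth /pedges nth_zip_cond size_zip size_behead Hsz ifT //; lia.
have -> : b = nth base (cycof (lens m.+1) i) k.+1.
  by rewrite -[b]/((a,b).2) -Hnth /pedges nth_zip_cond size_zip size_behead Hsz ifT /= ?nth_behead //; lia.
rewrite !phi_cyc //; try lia.
have Hbp := bp_Ppath m (lens m) i.
have /andP [Hp _] := gp_Ppath Hi'.
move: Hbp Hp HL Hk'. case/bpE => [bs [-> Hl]] /= Hp HL Hk2.
move/(pathP base): Hp => Hp. apply: Hp. rewrite /plen /= in Hk2. lia.
Qed.

Definition blk l k := pcat (rep k eloop) (rep 2 (cycof l 1)).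
Definition kn l := 2 * (1 + sumn l).
Definition Lc l := plen (cycof l 1).
Definition O l s := sumn [seq k + 2 * Lc l | k <- iota 1 s.-1] + s.

Lemma P1E n l : Ppath n.+1 l 1 =
  pcats ([seq blk l k | k <- iota 1 (kn l)] ++ [:: eloop; tail2 n.+1 l 2; eloop]).
Proof. by []. Qed.

Lemma bp_blk l k : bp (blk l k).
Proof. apply: bp_pcat; apply: bp_rep => //; exact: bp_cyc. Qed.

Lemma plen_blk l k : plen (blk l k) = k + 2 * Lc l.
Proof.
rewrite /blk plen_pcat ?plen_rep //; try (apply: bp_rep => //; exact: bp_cyc).
  by rewrite plen_eloop muln1 /Lc.
exact: bp_cyc.
Qed.

Lemma all_bp_blks l s : all bp [seq blk l k | k <- s].
Proof. apply/allP => p /mapP [k _ ->]. exact: bp_blk. Qed.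

Lemma plen_blks l s : plen (pcats [seq blk l k | k <- s]) = sumn [seq k + 2 * Lc l | k <- s].
Proof.
rewrite plen_pcats ?all_bp_blks // -map_comp. congr sumn. apply: eq_map => k /=.
exact: plen_blk.
Qed.

Lemma nth_pcats_mid A b B x : all bp A -> bp b -> all bp B -> x <= plen b ->
  nth base (pcats (A ++ b :: B)) (plen (pcats A) + x) = nth base b x.
Proof.
move=> HA Hb HB Hx. rewrite pcats_cat //=; last by rewrite Hb.
rewrite nth_pcatr; first last.
- apply: bp_pcat => //; exact: bp_pcats.
- exact: bp_pcats.
rewrite nth_pcatl //.
Qed.

Lemma iota_split a s n : s < n -> iota a n = iota a s ++ (a + s) :: iota (a + s).+1 (n - s.+1).
Proof.
move=> Hs. have -> : n = s + (n - s.+1).+1 by lia.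
rewrite iotaD. congr (_ ++ _). by have -> : s + (n - s.+1).+1 - s.+1 = n - s.+1 by lia.
Qed.

Lemma all_bp3 n l : all bp [:: eloop; tail2 n l 2; eloop].
Proof. by rewrite /= bp_tail2. Qed.

Lemma P_block n l s x : 1 <= s <= kn l -> x <= 2 * Lc l ->
  nth base (Ppath n.+1 l 1) (O l s + x) = nth base (rep 2 (cycof l 1)) x.
Proof.
move=> Hs Hx. rewrite P1E (@iota_split 1 s.-1 (kn l)); last by lia.
have -> : 1 + s.-1 = s by lia.
rewrite map_cat /= -catA cat_cons.
rewrite /O -plen_blks -addnA nth_pcats_mid ?all_bp_blks ?bp_blk //; first last.
- by rewrite plen_blk; lia.
- by rewrite all_cat all_bp_blks all_bp3.
have Hs' : plen (rep s eloop) = s by rewrite plen_rep // plen_eloop muln1.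
have -> : s + x = plen (rep s eloop) + x by rewrite Hs'.
rewrite /blk nth_pcatr //; apply: bp_rep => //; exact: bp_cyc.
Qed.

Lemma O_succ l s : 1 <= s -> O l s.+1 = O l s + s + 1 + 2 * Lc l.
Proof.
move=> Hs. rewrite /O /=. rewrite (@iota_split 1 s.-1 s); last by lia.
have -> : s - s.-1.+1 = 0 by lia.
rewrite map_cat sumn_cat /=. have -> : 1 + s.-1 = s by lia. lia.
Qed.

Lemma O1 l : O l 1 = 1. Proof. by []. Qed.

Lemma O_mono l s t : 1 <= s <= t -> O l s <= O l t.
Proof.
move=> /andP [H1 H2]. rewrite -(subnKC H2).
elim: (t - s) => [|d IH]; first by rewrite addn0.
rewrite addnS O_succ; last by lia. lia.
Qed.

Lemma plen_P1 n l : plen (Ppath n.+1 l 1) = O l (kn l) + 2 * Lc l + plen (tail2 n.+1 l 2) + 2.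
Proof.
rewrite P1E pcats_cat ?all_bp_blks ?all_bp3 //.
rewrite plen_pcat; [| apply: bp_pcats; exact: all_bp_blks | apply: bp_pcats; exact: all_bp3].
have H3 : sumn (map plen [:: eloop; tail2 n.+1 l 2; eloop]) = plen (tail2 n.+1 l 2) + 2.
  rewrite /= plen_eloop; lia.
rewrite plen_blks plen_pcats ?all_bp3 // H3 /O.
rewrite (@iota_split 1 (kn l).-1 (kn l)); last by rewrite /kn; lia.
have -> : kn l - (kn l).-1.+1 = 0 by rewrite /kn; lia.
rewrite map_cat sumn_cat /=. have -> : 1 + (kn l).-1 = kn l by rewrite /kn; lia.
lia.
Qed.

Lemma nth_rep2l c x : bp c -> x <= plen c -> nth base (rep 2 c) x = nth base c x.
Proof. move=> Hc Hx. by rewrite rep2 nth_pcatl. Qed.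

Lemma nth_rep2r c x : bp c -> nth base (rep 2 c) (plen c + x) = nth base c x.
Proof. move=> Hc. by rewrite rep2 nth_pcatr. Qed.

Lemma sumn_nth_iota0 s k : sumn [seq nth 0 s j | j <- iota 0 k] <= sumn s.
Proof.
elim: s k => [|a s IH] k.
  elim: (iota 0 k) => //= j s IH. by case: j.
case: k => [|k] /=; first lia.
rewrite -(addn0 1) iotaDl -map_comp.
have -> : [seq (nth 0 (a :: s) \o addn 1) i | i <- iota 0 k] = [seq nth 0 s j | j <- iota 0 k].
  by apply: eq_map => j.
have := IH k. lia.
Qed.

Lemma sumn_nth_iota2 l k : sumn [seq nth 0 l r.-1 | r <- iota 2 k] <= sumn l - nth 0 l 0.
Proof.
have -> : [seq nth 0 l r.-1 | r <- iota 2 k] = [seq nth 0 (behead l) j | j <- iota 0 k].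
  rewrite -(addn0 2) iotaDl -map_comp. apply: eq_map => j /=.
  rewrite add1n. case: l => [|a l]; first by rewrite !nth_nil. by [].
have := sumn_nth_iota0 (behead l) k. case: l => //= a l. lia.
Qed.

Lemma sumn_map2 (T : Type) (f : T -> nat) s : sumn [seq 2 * f x | x <- s] = 2 * sumn [seq f x | x <- s].
Proof. elim: s => //= a s ->. lia. Qed.

Lemma plen_cycof l r : 0 < nth 0 l r.-1 -> plen (cycof l r) = nth 0 l r.-1.
Proof. move=> H. by rewrite /cycof plen_cyc. Qed.

Lemma tail_bound N l : (forall r, 2 <= r <= N -> 0 < nth 0 l r.-1) ->
  plen (tail2 N l 2) <= 2 * (sumn l - nth 0 l 0).
Proof.
move=> Hpos. rewrite /tail2 plen_pcats; last first.
  apply/allP => p /mapP [j _ ->]. apply: bp_rep. exact: bp_cyc.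
rewrite -map_comp.
have -> : [seq (plen \o (fun j => rep 2 (cycof l j))) i | i <- iota 2 (N.+1 - 2)]
        = [seq 2 * nth 0 l r.-1 | r <- iota 2 (N.+1 - 2)].
  apply/eq_in_map => r Hr /=. rewrite mem_iota in Hr.
  rewrite plen_rep ?bp_cyc // plen_cycof //. apply: Hpos. lia.
rewrite sumn_map2. have := sumn_nth_iota2 l (N.+1 - 2). lia.
Qed.

Lemma Lc_lens m : 1 <= m -> Lc (lens m) = nth 0 (lens m) 0.
Proof. move=> Hm. rewrite /Lc plen_cycof //. exact: (@lens_pos m 1). Qed.

Lemma tail_bound_lens m : plen (tail2 m (lens m) 2) <= 2 * (sumn (lens m) - nth 0 (lens m) 0).
Proof. apply: tail_bound => r Hr. apply: lens_pos. lia. Qed.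

Lemma P_tail n l y : y <= plen (tail2 n.+1 l 2) ->
  nth base (Ppath n.+1 l 1) (plen (pcats [seq blk l k | k <- iota 1 (kn l)]) + (1 + y))
  = nth base (tail2 n.+1 l 2) y.
Proof.
move=> Hy. rewrite P1E pcats_cat ?all_bp_blks ?all_bp3 //.
rewrite nth_pcatr; [| apply: bp_pcats; exact: all_bp_blks | apply: bp_pcats; exact: all_bp3].
rewrite pcats_cons -plen_eloop nth_pcatr //; last first.
  apply: bp_pcats. by rewrite /= bp_tail2.
rewrite pcats_cons nth_pcatl //. exact: bp_tail2.
Qed.

Lemma plen_P_split n l : plen (Ppath n.+1 l 1) =
  plen (pcats [seq blk l k | k <- iota 1 (kn l)]) + plen (tail2 n.+1 l 2) + 2.
Proof.
rewrite P1E pcats_cat ?all_bp_blks ?all_bp3 //.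
rewrite plen_pcat; [| apply: bp_pcats; exact: all_bp_blks | apply: bp_pcats; exact: all_bp3].
have H3 : sumn (map plen [:: eloop; tail2 n.+1 l 2; eloop]) = plen (tail2 n.+1 l 2) + 2.
  rewrite /= plen_eloop; lia.
rewrite [plen (pcats [:: _; _; _])]plen_pcats ?all_bp3 // H3. lia.
Qed.

Lemma tail_occ N l i p : 2 <= i <= N -> p <= plen (rep 2 (cycof l i)) ->
  exists y, y <= plen (tail2 N l 2) /\ nth base (tail2 N l 2) y = nth base (rep 2 (cycof l i)) p.
Proof.
move=> Hi Hp. rewrite /tail2 (@iota_split 2 (i - 2) (N.+1 - 2)); last by lia.
have -> : 2 + (i - 2) = i by lia.
rewrite map_cat /=.
set A := [seq rep 2 (cycof l j) | j <- iota 2 (i - 2)].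
set B := [seq rep 2 (cycof l j) | j <- iota i.+1 _].
have HA : all bp A. apply/allP => q /mapP [j _ ->]. apply: bp_rep. exact: bp_cyc.
have HB : all bp B. apply/allP => q /mapP [j _ ->]. apply: bp_rep. exact: bp_cyc.
have Hb : bp (rep 2 (cycof l i)) by apply: bp_rep; exact: bp_cyc.
exists (plen (pcats A) + p). split; last by rewrite nth_pcats_mid.
rewrite pcats_cat //; last by apply/andP; split.
rewrite plen_pcat; [| exact: bp_pcats | apply: bp_pcat => //; exact: bp_pcats].
rewrite plen_pcat //; last exact: bp_pcats. lia.
Qed.

Lemma occ K u : 1 <= K -> valid K u ->
  exists a, a <= plen (Ppath K (lens K) 1) /\ nth base (Ppath K (lens K) 1) a = u.
Proof.
move=> HK Hu. case: (u =P base) => [-> | Hb].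
  exists 0. split => //. by rewrite nth0_bp // bp_Ppath.
move: Hu; rewrite /valid (introF eqP Hb) /= => /andP [Hi Hp].
case: u Hb Hi Hp => i p Hb /= Hi Hp.
case: K HK Hi Hp => [|n] // _ Hi Hp.
have HLc := Lc_lens (isT : 0 < n.+1).
case: (i =P 1) => [Ei | Ni].
  subst i. change (is_true (0 < p < nth 0 (lens n.+1) 0)) in Hp. exists (O (lens n.+1) 1 + p). split.
    rewrite plen_P1. have := @O_mono (lens n.+1) 1 (kn (lens n.+1)). rewrite /kn. lia.
  rewrite P_block; last by lia. 2: by rewrite /kn; lia.
  rewrite nth_rep2l ?bp_cyc //; last by move: HLc; rewrite /Lc; lia.
  rewrite /cycof. change (nth 0 (lens n.+1) 1.-1) with (nth 0 (lens n.+1) 0). rewrite nth_cyc; last by lia.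
  rewrite ifF; last by lia. rewrite ifT //; lia.
have Hpos : 0 < nth 0 (lens n.+1) i.-1 by apply: lens_pos; lia.
have [y [Hy Ey]] := @tail_occ n.+1 (lens n.+1) i p (ltac:(lia)) (ltac:(rewrite plen_rep ?bp_cyc // plen_cycof //; lia)).
exists (plen (pcats [seq blk (lens n.+1) k | k <- iota 1 (kn (lens n.+1))]) + (1 + y)).
split; first by rewrite plen_P_split; lia.
rewrite P_tail // Ey nth_rep2l ?bp_cyc //; last by rewrite plen_cycof //; lia.
rewrite /cycof nth_cyc //. rewrite ifF; last by lia. rewrite ifT //; lia.
Qed.

Definition cpos m x := nth base (cycof (lens m) 1) x.
Definition Lm m := nth 0 (lens m) 0.

Fixpoint down (d m : nat) (v : vtx) : vtx :=
  match d with 0 => v | d'.+1 => phi m (down d' m.+1 v) end.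

Lemma down_S d m v : down d.+1 m v = down d m (phi (m + d) v).
Proof.
elim: d m => [|d IH] m; first by rewrite addn0.
change (down d.+2 m v) with (phi m (down d.+1 m.+1 v)). by rewrite IH addSnnS.
Qed.

Lemma down_valid d m v : valid (m + d) v -> valid m (down d m v).
Proof.
elim: d m => [|d IH] m; first by rewrite addn0.
rewrite -addSnnS => H /=. apply: phi_valid. exact: IH.
Qed.

Lemma down_edge d m a b : edge (m + d) a b -> edge m (down d m a) (down d m b).
Proof.
elim: d m => [|d IH] m; first by rewrite addn0.
rewrite -addSnnS => H /=. apply: phi_edge. exact: IH.
Qed.

Lemma Lm_pos m : 1 <= m -> 0 < Lm m.
Proof. move=> Hm. exact: (@lens_pos m 1). Qed.

Lemma Lm_succ m : Lm m.+1 = plen (Ppath m (lens m) 1).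
Proof. rewrite /Lm. exact: (@lens_nth m 1). Qed.

Lemma Lc_Lm m : 1 <= m -> Lc (lens m) = Lm m.
Proof. move=> Hm. by rewrite Lc_lens. Qed.

Lemma Lm_grow m : 1 <= m -> 2 * Lm m + 1 <= Lm m.+1.
Proof.
case: m => // n _. rewrite [Lm n.+2]Lm_succ plen_P1 Lc_Lm //.
have := @O_mono (lens n.+1) 1 (kn (lens n.+1)). rewrite O1 /kn. lia.
Qed.

Lemma Lm_mono M m : 1 <= M <= m -> Lm M + (m - M) <= Lm m.
Proof.
elim: m => [|m IH] H; first lia.
case: (leqP M m) => Hm.
  have := IH (ltac:(lia)). have := Lm_grow (ltac:(lia) : 1 <= m). lia.
have -> : M = m.+1 by lia. by rewrite subnn addn0.
Qed.

Lemma cpos_valid m x : 1 <= m -> x <= Lm m -> valid m (cpos m x).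
Proof.
move=> Hm Hx. have HL := Lm_pos Hm.
rewrite /cpos /cycof nth_cyc //. case: ifP => Hx0 //. case: ifP => Hx2 //.
rewrite /valid /= Hm /=. apply/andP; split; last exact: Hx2.
by move/negbT: Hx0; lia.
Qed.

Lemma mem_pedges p x : x < plen p -> (nth base p x, nth base p x.+1) \in pedges p.
Proof.
move=> Hx. rewrite -nth_behead.
have Hs : x < size (pedges p).
  by rewrite /pedges size_zip size_behead (minn_idPr (leq_pred _)).
have <- : nth (base, base) (pedges p) x = (nth base p x, nth base (behead p) x).
  by rewrite /pedges nth_zip_cond ifT.
exact: mem_nth.
Qed.

Lemma cpos_edge m x : 1 <= m -> x < Lm m -> edge m (cpos m x) (cpos m x.+1).
Proof.
move=> Hm Hx. rewrite /edge. apply/orP; right. apply/hasP.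
exists (cycof (lens m) 1).
  apply/mapP. exists 1 => //. rewrite mem_iota. lia.
apply: mem_pedges. rewrite /cycof plen_cyc //. exact: Lm_pos.
Qed.

Lemma phi_cpos m x : 1 <= m -> x <= Lm m -> phi m (cpos m.+1 x.+1) = cpos m x.
Proof.
case: m => // n _ Hx.
rewrite /cpos phi_cyc //; last first.
  have := Lm_grow (isT : 0 < n.+1). rewrite [Lm n.+2]Lm_succ. lia.
have -> : x.+1 = O (lens n.+1) 1 + x by rewrite O1 add1n.
rewrite P_block; first last.
- rewrite Lc_Lm //. lia.
- rewrite /kn. lia.
rewrite nth_rep2l ?bp_cyc //. move: (Lc_Lm (isT : 0 < n.+1)). rewrite /Lc => ->. exact: Hx.
Qed.

Definition pt M q : point :=
  fun m => if M <= m then cpos m (q + (m - M)) else down (M - m) m (cpos M q).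

Lemma inX_pt M q : 1 <= M -> q <= Lm M -> inX (pt M q).
Proof.
move=> HM Hq n. rewrite /pt. case: (leqP M n) => Hn.
  rewrite ifT; last by lia.
  split.
    apply: cpos_valid; first lia.
    have := @Lm_mono M n (ltac:(lia)). lia.
  have -> : q + (n.+1 - M) = (q + (n - M)).+1 by lia.
  apply: phi_cpos; first lia.
  have := @Lm_mono M n (ltac:(lia)). lia.
split.
  apply: down_valid. rewrite subnKC; last by lia. apply: cpos_valid => //.
case: (leqP M n.+1) => Hn1.
  have -> : M = n.+1 by lia. by rewrite subSnn subnn addn0.
have -> : M - n = (M - n.+1).+1 by lia.
by [].
Qed.

Lemma Trel_pt M q : 1 <= M -> q < Lm M -> Trel (pt M q) (pt M q.+1).
Proof.
move=> HM Hq n. rewrite /pt. case: (leqP M n) => Hn.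
  rewrite addSn. apply: cpos_edge; first lia.
  have := @Lm_mono M n (ltac:(lia)). lia.
apply: down_edge. rewrite subnKC; last by lia. exact: cpos_edge.
Qed.

Lemma Tpow_pt M k q : 1 <= M -> q + k <= Lm M -> Tpow k (pt M q) (pt M (q + k)).
Proof.
move=> HM. elim: k q => [|k IH] q Hk; first by rewrite addn0.
exists (pt M q.+1). split; first by apply: inX_pt => //; lia.
split; first by apply: Trel_pt => //; lia.
rewrite -addSnnS. apply: IH. lia.
Qed.

Lemma agree x y K : inX x -> inX y -> x K = y K -> forall i, i <= K -> x i = y i.
Proof.
move=> Hx Hy HK i Hi. have [d Hd] : exists d, K = i + d by exists (K - i); lia.
subst K. elim: d i {Hi} HK => [|d IH] i H; first by rewrite addn0 in H.
have [_ <-] := Hx i. have [_ <-] := Hy i. rewrite (IH i.+1) //. by rewrite addSnnS.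
Qed.

Definition PsiV K j w := down (j - K) K w.

Lemma Psi_step K j p : K <= j -> p <= Lm j.+1 ->
  PsiV K j.+1 (cpos j.+1 p) = PsiV K j (nth base (Ppath j (lens j) 1) p).
Proof.
move=> HK Hp. rewrite /PsiV. have -> : j.+1 - K = (j - K).+1 by lia.
rewrite down_S. have -> : K + (j - K) = j by lia.
rewrite /cpos phi_cyc //; by rewrite -Lm_succ.
Qed.

Lemma plen_P1_Lm j : 1 <= j ->
  Lm j.+1 = O (lens j) (kn (lens j)) + 2 * Lm j + plen (tail2 j (lens j) 2) + 2.
Proof. case: j => // n _. by rewrite Lm_succ plen_P1 Lc_Lm. Qed.

Lemma block_at j s x : 1 <= j -> 1 <= s <= kn (lens j) -> x <= 2 * Lm j ->
  O (lens j) s + x <= Lm j.+1 /\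
  nth base (Ppath j (lens j) 1) (O (lens j) s + x) = nth base (rep 2 (cycof (lens j) 1)) x.
Proof.
move=> Hj Hs Hx. split.
  rewrite plen_P1_Lm //. have := @O_mono (lens j) s (kn (lens j)). lia.
case: j Hj Hs Hx => // n _ Hs Hx. rewrite P_block //. by rewrite Lc_Lm.
Qed.

Lemma rep2_cposl j x : 1 <= j -> x <= Lm j -> nth base (rep 2 (cycof (lens j) 1)) x = cpos j x.
Proof. move=> Hj Hx. rewrite nth_rep2l ?bp_cyc //. move: (Lc_Lm Hj). rewrite /Lc => ->. exact: Hx. Qed.

Lemma rep2_cposr j x : 1 <= j -> nth base (rep 2 (cycof (lens j) 1)) (Lm j + x) = cpos j x.
Proof. move=> Hj. move: (Lc_Lm Hj). rewrite /Lc => <-. by rewrite nth_rep2r ?bp_cyc. Qed.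

Definition inv K u v j a b :=
  [/\ K < j, a <= Lm j, b <= Lm j, PsiV K j (cpos j a) = u & PsiV K j (cpos j b) = v].

Definition good K u v n := exists M q,
  [/\ K < M, q + n <= Lm M, PsiV K M (cpos M q) = u & PsiV K M (cpos M (q + n)) = v].

Lemma realize K u v j a b s : inv K u v j a b -> 1 <= s -> s < kn (lens j) ->
  good K u v (Lm j - a + b + s + 1).
Proof.
move=> [Hj Ha Hb Hu Hv] Hs1 Hs2.
have Hj1 : 1 <= j by lia.
exists j.+1, (O (lens j) s + (Lm j + a)).
have [B1 E1] := @block_at j s (Lm j + a) Hj1 (ltac:(lia)) (ltac:(lia)).
have Heq : O (lens j) s + (Lm j + a) + (Lm j - a + b + s + 1) = O (lens j) s.+1 + b.
  rewrite O_succ // Lc_Lm //. lia.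
have [B2 E2] := @block_at j s.+1 b Hj1 (ltac:(lia)) (ltac:(lia)).
split.
- lia.
- by rewrite Heq.
- rewrite Psi_step //; last by lia. by rewrite E1 rep2_cposr.
- rewrite Heq Psi_step //; last by lia. by rewrite E2 rep2_cposl.
Qed.

Lemma step K u v j a b : inv K u v j a b ->
  exists a' b', inv K u v j.+1 a' b' /\ Lm j - a + b < Lm j.+1 - a' + b' /\
     Lm j.+1 - a' + b' + 1 <= Lm j - a + b + kn (lens j).
Proof.
move=> [Hj Ha Hb Hu Hv].
have Hj1 : 1 <= j by lia.
have Hkn : 1 <= kn (lens j) by rewrite /kn; lia.
exists (O (lens j) (kn (lens j)) + (Lm j + a)), (O (lens j) 1 + b).
have [B1 E1] := @block_at j (kn (lens j)) (Lm j + a) Hj1 (ltac:(lia)) (ltac:(lia)).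
have [B2 E2] := @block_at j 1 b Hj1 (ltac:(lia)) (ltac:(lia)).
have HT := tail_bound_lens j.
have HS := nth0_sumn (lens j).
have HL := plen_P1_Lm Hj1.
have HLp := Lm_pos Hj1.
rewrite O1 in B2 E2 HL *.
split; first split.
- lia.
- exact: B1.
- exact: B2.
- rewrite Psi_step //; try lia. by rewrite E1 rep2_cposr.
- rewrite Psi_step //; try lia. by rewrite E2 rep2_cposl.
rewrite /kn in HL *. rewrite /Lm in HLp HL *. split; lia.
Qed.

Lemma chain K u v d : forall j a b n, inv K u v j a b ->
  Lm j - a + b + 2 <= n -> n - (Lm j - a + b) <= d -> good K u v n.
Proof.
elim: d => [|d IH] j a b n Hinv H1 H2; first lia.
case: (leqP n (Lm j - a + b + kn (lens j))) => Hn.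
  have -> : n = Lm j - a + b + (n - (Lm j - a + b) - 1) + 1 by lia.
  apply: (realize Hinv); lia.
have [a' [b' [Hinv' [Hlt Hle]]]] := step Hinv.
apply: (IH _ _ _ _ Hinv'); lia.
Qed.

Theorem lemma3p5 :
  forall U V : point -> Prop,
    openX U -> openX V -> (exists x, U x) -> (exists y, V y) ->
    exists N, forall n, N <= n ->
      exists x y, U x /\ V y /\ Tpow n x y.
Proof.
move=> U V [HUX HUo] [HVX HVo] [x0 Hx0] [y0 Hy0].
have [kU HkU] := HUo x0 Hx0. have [kV HkV] := HVo y0 Hy0.
have X0 := HUX x0 Hx0. have Y0 := HVX y0 Hy0.
pose K := (maxn kU kV).+1.
have HK : 1 <= K by [].
have [Hu _] := X0 K. have [Hv _] := Y0 K.
have [a [Ha Ea]] := occ HK Hu. have [b [Hb Eb]] := occ HK Hv.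
have Hinv : inv K (x0 K) (y0 K) K.+1 a b.
  split => //; try by rewrite Lm_succ.
    by rewrite Psi_step ?Lm_succ // Ea /PsiV subnn.
  by rewrite Psi_step ?Lm_succ // Eb /PsiV subnn.
exists (Lm K.+1 - a + b + 2) => n Hn.
have [M [q [HM Hq Eu Ev]]] := chain (d := n) Hinv Hn (leq_subr _ _).
exists (pt M q), (pt M (q + n)).
have HM1 : 1 <= M by lia.
have Hq0 : q <= Lm M by lia.
split; [|split].
- apply: HkU; first by apply: inX_pt.
  move=> i Hi. apply: (@agree _ _ K (inX_pt HM1 Hq0) X0); last by rewrite /K; lia.
  rewrite /pt ifF; last by lia. exact: Eu.
- apply: HkV; first by apply: inX_pt.
  move=> i Hi. apply: (@agree _ _ K (inX_pt HM1 Hq) Y0); last by rewrite /K; lia.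
  rewrite /pt ifF; last by lia. exact: Ev.
- exact: Tpow_pt.
Qed.
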